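(* Let $i,i+(r-a),\ldots,i+s(r-a)$ be an $L$-brick. The restriction of the divisor $Z_{i+s(r-a)}$ to the $L$-resolution is equal to the divisor $Z^L_i$. If $i,i+a,\ldots,i+sa$ is an $R$-brick, then the restriction of the divisor $Z_i$ to the $R$-resolution is equal to the divisor $Z^R_i$.
   Context: Let $0<a<r$ be coprime integers, $b$ the inverse of $a$ modulo $r$, and for integers $s,t$ let $(s \bmod t)$ denote the least non-negative integer $u$ with $t\mid s-u$. Let $N=\mathbb{Z}^3+\mathbb{Z}\frac1r(1,a,r-a)$, and $p_i=\frac1r\big((-ib \bmod r),\,r-i,\,i\big)$ for $i=0,\ldots,r$ (so $p_0=e_2$, $p_r=e_3$, $p_{r-a}=\frac1r(1,a,r-a)$). The Danilov resolution of the toric singularity $\frac1r(1,a,r-a)$ (cone $\langle e_1,e_2,e_3\rangle$ in $N$) is obtained by the weighted blow-up at $p_{r-a}$ followed recursively by the Danilov resolutions of the cones $\langle e_1,e_2,p_{r-a}\rangle$ and $\langle e_1,e_3,p_{r-a}\rangle$, which are toric singularities of type $\frac{1}{r-a}(1,(r \bmod (r-a)),(-r \bmod (r-a)))$ and $\frac1a(1,(-r \bmod a),(r \bmod a))$ respectively (via lattice isomorphisms fixing $e_1$ and sending the last, resp. second, basis vector to $p_{r-a}$). The resolutions of these two subcones are called the $L$-resolution and the $R$-resolution. Let $D_k$ be the toric divisor of the ray through $p_k$. The permutation $\tau(r,a,\cdot)$ of $\{0,\ldots,r-1\}$ is defined recursively: if $a\in\{1,r-1\}$, $\tau(r,a,i)=(ai-1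 \bmod r)$; otherwise $\tau(r,a,i)=\tau(r-a,(r\bmod (r-a)),(i \bmod (r-a)))$ if $i\ge a$, and $\tau(r,a,i)=(r-a)+\tau(a,(-r \bmod a),i)$ if $i<a$. Set $Z_i=\sum_{k=\tau(r,a,i)+1}^{r}D_k$ for $i=0,\ldots,r-1$. The divisors $Z^L_i$ (resp. $Z^R_i$) on the $L$- (resp. $R$-)resolution are defined by the same formula with $(r,a)$ replaced by $(r-a,(r\bmod(r-a)))$ (resp. $(a,(-r\bmod a))$). A sequence $i,i+(r-a),\ldots,i+s(r-a)$ is an $L$-brick if $i<r-a$, $i+(s+1)(r-a)>r$ and every term is $<r$; a sequence $i,i+a,\ldots,i+sa$ is an $R$-brick if $i<a$, $i+(s+1)a>r$ and every term is $<r$. *)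

(* Defs.v *)
From mathcomp Require Import all_boot all_order all_algebra.
Set Implicit Arguments. Unset Strict Implicit. Unset Printing Implicit Defensive.
Import Order.TTheory GRing.Theory Num.Theory.

(* Vectors of N_Q = Q^3 (the lattice N lives inside it). *)
Definition vec := (rat * rat * rat)%type.

Local Open Scope ring_scope.
Definition vadd (v w : vec) : vec := (v.1.1 + w.1.1, v.1.2 + w.1.2, v.2 + w.2).
Definition vscale (c : rat) (v : vec) : vec := (c * v.1.1, c * v.1.2, c * v.2).
Definition e1 : vec := (1, 0, 0).
Definition e2 : vec := (0, 1, 0).
Definition e3 : vec := (0, 0, 1).
Local Close Scope ring_scope.

Definition modinv (r a : nat) : nat :=
  find (fun b => (a * b) %% r == 1 %% r) (iota 0 r).

Definition negmod (n t : nat) : nat := (t - n %% t) %% t.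

(* p_i = 1/r ((-ib mod r), r-i, i) for the singularity 1/r(1,a,r-a) *)
Definition pt (r a i : nat) : vec :=
  (((negmod (i * modinv r a) r)%:R / r%:R)%R,
   ((r - i)%:R / r%:R)%R, (i%:R / r%:R)%R).

(* the permutation tau(r,a,.) ; fuel-based recursion (fuel = r suffices,
   since both recursive calls strictly decrease r when 0 < a < r). *)
Fixpoint tau_fuel (n r a i : nat) : nat :=
  match n with
  | 0 => 0
  | n'.+1 =>
    if (a == 1) || (a == r - 1) then (a * i + r - 1) %% r
    else if a <= i then tau_fuel n' (r - a) (r %% (r - a)) (i %% (r - a))
    else (r - a) + tau_fuel n' a (negmod r a) i
  end.
Definition tau (r a i : nat) : nat := tau_fuel r r a i.

(* A torus-invariant divisor on a resolution is recorded by its coefficient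
   on each ray (ray given by its generator vector). *)
Definition divisor := vec -> nat.

Definition Ddiv (r a k : nat) : divisor := fun v => nat_of_bool (v == pt r a k).

Definition Zdiv (r a i : nat) : divisor :=
  fun v => \sum_((tau r a i).+1 <= k < r.+1) Ddiv r a k v.

(* rays of the Danilov resolution of 1/r(1,a,r-a): e_1 and p_0..p_r *)
Definition res_rays (r a : nat) : seq vec := e1 :: [seq pt r a k | k <- iota 0 r.+1].

Definition rL (r a : nat) := r - a.
Definition aL (r a : nat) := r %% (r - a).
Definition rR (r a : nat) := a.
Definition aR (r a : nat) := negmod r a.

(* lattice isomorphisms identifying the L- (resp. R-) cone with
   <e1,e2,p_{r-a}> (resp. <e1,e3,p_{r-a}>): fix e1, send the last
   (resp. second) basis vector to p_{r-a}, and the remaining one to e2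
   (resp. e3). *)
Definition psiL (r a : nat) (w : vec) : vec :=
  vadd (vadd (vscale w.1.1 e1) (vscale w.1.2 e2)) (vscale w.2 (pt r a (r - a))).
Definition psiR (r a : nat) (w : vec) : vec :=
  vadd (vadd (vscale w.1.1 e1) (vscale w.1.2 (pt r a (r - a)))) (vscale w.2 e3).

(* restrictions of a divisor on the resolution of 1/r(1,a,r-a) to the
   L-/R-resolution, read in the coordinates of the subcone's lattice *)
Definition restrL (r a : nat) (Z : divisor) : divisor := fun w => Z (psiL r a w).
Definition restrR (r a : nat) (Z : divisor) : divisor := fun w => Z (psiR r a w).

Definition ZLdiv (r a i : nat) : divisor := Zdiv (rL r a) (aL r a) i.
Definition ZRdiv (r a i : nat) : divisor := Zdiv (rR r a) (aR r a) i.

Definition Lbrick (r a i s : nat) : Prop :=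
  [/\ i < r - a, r < i + s.+1 * (r - a) & forall t, t <= s -> i + t * (r - a) < r].
Definition Rbrick (r a i s : nat) : Prop :=
  [/\ i < a, r < i + s.+1 * a & forall t, t <= s -> i + t * a < r].

(* Main.v *)
Require Import Defs.
From mathcomp Require Import all_boot all_order all_algebra.
From mathcomp Require Import zify ring lra.
Import GRing.Theory Num.Theory.
Lemma modinv_spec r a : 0 < r -> 0 < a -> coprime a r -> (a * modinv r a) %% r = 1 %% r.
Proof.
move=> r0 a0 co.
have ex : has (fun b => (a * b) %% r == 1 %% r) (iota 0 r).
  case: (egcdnP r a0) => km kn E _.
  apply/hasP; exists (km %% r); first by rewrite mem_iota ltn_mod r0.
  rewrite modnMmr mulnC E (eqP co) modnMDl //.
rewrite /modinv; move: (nth_find 0 ex); rewrite nth_iota ?add0n; first by move/eqP.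
by move: ex; rewrite has_find size_iota.
Qed.
Lemma negmod_lt n t : 0 < t -> negmod n t < t.
Proof. by move=> t0; rewrite /negmod ltn_mod. Qed.
Lemma negmod_dvd n t : 0 < t -> t %| negmod n t + n.
Proof.
move=> t0; rewrite /negmod /dvdn modnDml {2}(divn_eq n t) addnCA subnK ?modnMDl ?modnn //.
by rewrite ltnW // ltn_mod.
Qed.
Lemma modinv_spec' r a : 0 < r -> coprime a r -> (a * modinv r a) %% r = 1 %% r.
Proof.
move=> r0 co; case: (posnP a) => [a0|a0]; last exact: modinv_spec.
by move: co; rewrite a0 /coprime gcd0n => /eqP ->; rewrite !modn1.
Qed.

Lemma congr_eq (X Y m1 m2 : nat) : coprime m1 m2 -> X < m1 * m2 -> Y < m1 * m2 ->
  (m1%:Z %| (X%:Z - Y%:Z)%R)%Z -> (m2%:Z %| (X%:Z - Y%:Z)%R)%Z -> X = Y.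
Proof.
move=> co hX hY d1 d2.
have : ((m1 * m2)%:Z %| (X%:Z - Y%:Z)%R)%Z.
  by rewrite PoszM Gauss_dvdz ?d1 ?d2.
rewrite -eqz_mod_dvd !modz_nat !modn_small //.
by move/eqP => [].
Qed.
Lemma nat_modz (d x y : nat) : x %% d = y %% d -> (d%:Z %| (x%:Z - y%:Z)%R)%Z.
Proof. by move=> h; rewrite -eqz_mod_dvd !modz_nat h. Qed.

Lemma coprime_sub a r : a < r -> coprime a r -> coprime (r %% (r - a)) (r - a).
Proof.
move=> ar co; rewrite coprime_modl /coprime gcdnC.
have E : r = a + (r - a) by rewrite subnKC // ltnW.
rewrite {2}E gcdnDr gcdnC.
by move: co; rewrite /coprime {1}E addnC gcdnDr.
Qed.

Lemma arithL r a k : 1 < r -> 0 < a -> a < r -> coprime a r -> k <= r - a ->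
  r * negmod (k * modinv (r-a) (r %% (r-a))) (r-a) + k = (r-a) * negmod (k * modinv r a) r.
Proof.
move=> r1 a0 ar co kle.
set rL := r - a; set aL := r %% rL; set bL := modinv rL aL; set b := modinv r a.
set nL := negmod (k * bL) rL; set n := negmod (k * b) r.
have rL0 : 0 < rL by rewrite subn_gt0.
have coL : coprime aL rL by exact: coprime_sub.
have F1 : (rL%:Z %| (nL%:Z + k%:Z * bL%:Z)%R)%Z by rewrite -PoszM -PoszD; exact: negmod_dvd.
have F2 : (rL%:Z %| (aL%:Z * bL%:Z - 1)%R)%Z by rewrite -PoszM; apply: nat_modz; exact: modinv_spec'.
have F3 : (rL%:Z %| (r%:Z - aL%:Z)%R)%Z by apply: nat_modz; rewrite modn_mod.
have F4 : (r%:Z %| (n%:Z + k%:Z * b%:Z)%R)%Z by rewrite -PoszM -PoszD; apply: negmod_dvd; lia.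
have F5 : (r%:Z %| (a%:Z * b%:Z - 1)%R)%Z.
  by rewrite -PoszM; apply: nat_modz; apply: modinv_spec' => //; lia.
have nLlt : nL < rL by exact: negmod_lt.
have nlt : n < r by apply: negmod_lt; lia.
have rLe : (rL%:Z = r%:Z - a%:Z)%R by rewrite subzn // ltnW.
apply: (@congr_eq _ _ r rL).
- by move: (@coprime_sub a r ar co); rewrite coprime_modl.
- have : rL < r by rewrite /rL; lia.
  move=> rLr; have h1 : r * nL.+1 <= r * rL by rewrite leq_mul2l nLlt orbT.
  move: h1; rewrite mulnS; move: kle; rewrite -/rL; lia.
- by rewrite mulnC ltn_mul2r rL0 nlt.
- rewrite PoszD !PoszM rLe.
  rewrite (_ : (_ - _)%R = (r%:Z * (nL%:Z - n%:Z) + a%:Z * (n%:Z + k%:Z * b%:Z) - k%:Z * (a%:Z * b%:Z - 1))%R); last by ring.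
  exact: (rpredB (rpredD (dvdz_mulr _ (dvdzz _)) (dvdz_mull _ F4)) (dvdz_mull _ F5)).
- rewrite PoszD !PoszM.
  rewrite (_ : (_ - _)%R = ((r%:Z - aL%:Z) * nL%:Z + aL%:Z * (nL%:Z + k%:Z * bL%:Z) - k%:Z * (aL%:Z * bL%:Z - 1) - rL%:Z * n%:Z)%R); last by ring.
  exact: (rpredB (rpredB (rpredD (dvdz_mulr _ F3) (dvdz_mull _ F1)) (dvdz_mull _ F2)) (dvdz_mulr _ (dvdzz _))).
Qed.
Lemma coprime_neg a r : 0 < a -> coprime a r -> coprime (negmod r a) a.
Proof.
move=> a0 co; rewrite /negmod coprime_modl /coprime.
have g : gcdn (r %% a) a = 1 by rewrite gcdn_modl gcdnC; apply/eqP.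
move: g; set x := r %% a => g.
have xa : x <= a by rewrite ltnW // ltn_mod.
have E : a = (a - x) + x by rewrite subnK.
rewrite {2}E gcdnDl gcdnC.
by move: g; rewrite {1}E gcdnDr => ->.
Qed.

Lemma arithR r a k : 1 < r -> 0 < a -> a < r -> coprime a r -> k <= a ->
  r * negmod (k * modinv a (negmod r a)) a + (a - k) = a * negmod ((r - a + k) * modinv r a) r.
Proof.
move=> r1 a0 ar co kle.
set aR := negmod r a; set bR := modinv a aR; set b := modinv r a.
set nR := negmod (k * bR) a; set n := negmod ((r - a + k) * b) r.
have coR : coprime aR a by exact: coprime_neg.
have G1 : (a%:Z %| (nR%:Z + k%:Z * bR%:Z)%R)%Z by rewrite -PoszM -PoszD; exact: negmod_dvd.
have G2 : (a%:Z %| (aR%:Z * bR%:Z - 1)%R)%Z by rewrite -PoszM; apply: nat_modz; exact: modinv_spec'.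
have G3 : (a%:Z %| (aR%:Z + r%:Z)%R)%Z by rewrite -PoszD; exact: negmod_dvd.
have G4 : (r%:Z %| (n%:Z + (r%:Z - a%:Z + k%:Z) * b%:Z)%R)%Z.
  by rewrite subzn ?(ltnW ar) // -PoszD -PoszM -PoszD; apply: negmod_dvd; lia.
have G5 : (r%:Z %| (a%:Z * b%:Z - 1)%R)%Z.
  by rewrite -PoszM; apply: nat_modz; apply: modinv_spec' => //; lia.
have nRlt : nR < a by exact: negmod_lt.
have nlt : n < r by apply: negmod_lt; lia.
have ake : ((a - k)%N%:Z = a%:Z - k%:Z)%R by rewrite subzn.
apply: (@congr_eq _ _ r a).
- by rewrite coprime_sym.
- have h1 : r * nR.+1 <= r * a by rewrite leq_mul2l nRlt orbT.
  move: h1; rewrite mulnS; move: kle ar; lia.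
- by rewrite mulnC ltn_mul2r a0 nlt.
- rewrite PoszD !PoszM ake.
  rewrite (_ : (_ - _)%R = (r%:Z * (nR%:Z + 1) - a%:Z * (n%:Z + (r%:Z - a%:Z + k%:Z) * b%:Z) + (a%:Z * b%:Z - 1) * (r%:Z - a%:Z + k%:Z))%R); last by ring.
  exact: (rpredD (rpredB (dvdz_mulr _ (dvdzz _)) (dvdz_mull _ G4)) (dvdz_mulr _ G5)).
- rewrite PoszD !PoszM ake.
  rewrite (_ : (_ - _)%R = ((aR%:Z + r%:Z) * nR%:Z - aR%:Z * (nR%:Z + k%:Z * bR%:Z) + k%:Z * (aR%:Z * bR%:Z - 1) + a%:Z * (1 - n%:Z))%R); last by ring.
  exact: (rpredD (rpredD (rpredB (dvdz_mulr _ G3) (dvdz_mull _ G1)) (dvdz_mull _ G2)) (dvdz_mulr _ (dvdzz _))).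
Qed.
Lemma negmod_c r a : 1 < r -> 0 < a -> a < r -> coprime a r ->
  negmod ((r - a) * modinv r a) r = 1.
Proof.
move=> r1 a0 ar co.
set b := modinv r a; set c := negmod ((r - a) * b) r.
have F1 : (r%:Z %| (c%:Z + (r%:Z - a%:Z) * b%:Z)%R)%Z.
  by rewrite subzn ?(ltnW ar) // -PoszM -PoszD; apply: negmod_dvd; lia.
have F2 : (r%:Z %| (a%:Z * b%:Z - 1)%R)%Z.
  by rewrite -PoszM; apply: nat_modz; apply: modinv_spec' => //; lia.
apply: (@congr_eq _ _ r 1).
- exact: coprimen1.
- by rewrite muln1; apply: negmod_lt; lia.
- by rewrite muln1.
- rewrite (_ : (_ - _)%R = (c%:Z + (r%:Z - a%:Z) * b%:Z) - r%:Z * b%:Z + (a%:Z * b%:Z - 1))%R; last by ring.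
  exact: (rpredD (rpredB F1 (dvdz_mulr _ (dvdzz _))) F2).
- by rewrite dvd1z.
Qed.

Local Open Scope ring_scope.
Lemma psiL_pt r a k : (1 < r)%N -> (0 < a)%N -> (a < r)%N -> coprime a r -> (k <= r - a)%N ->
  psiL r a (pt (r - a) (r %% (r - a)) k) = pt r a k.
Proof.
move=> r1 a0 ar co kle.
have H := congr1 (fun x : nat => x%:R : rat) (arithL r a k r1 a0 ar co kle).
move: H; rewrite /= natrD !natrM.
rewrite /psiL /vadd /vscale /pt /e1 /e2 /= negmod_c // subKn ?(ltnW ar) //.
rewrite !natrB ?(ltnW ar) ?(leq_trans kle (leq_subr _ _)) //.
set nL := negmod _ (r - a); set n := negmod _ r => H.
have r0 : (r%:R : rat) != 0 by rewrite pnatr_eq0 -lt0n; lia.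
have rL0 : (r%:R - a%:R : rat) != 0 by rewrite -natrB ?(ltnW ar) // pnatr_eq0 -lt0n; lia.
have En : (n%:R : rat) = (r%:R * nL%:R + k%:R) / (r%:R - a%:R).
  by rewrite H; field.
rewrite En; congr (_, _, _); field; by rewrite ?r0 ?rL0.
Qed.
Lemma psiR_pt r a k : (1 < r)%N -> (0 < a)%N -> (a < r)%N -> coprime a r -> (k <= a)%N ->
  psiR r a (pt a (negmod r a) k) = pt r a (r - a + k).
Proof.
move=> r1 a0 ar co kle.
have H := congr1 (fun x : nat => x%:R : rat) (arithR r a k r1 a0 ar co kle).
move: H; rewrite /= natrD !natrM.
rewrite /psiR /vadd /vscale /pt /e1 /e3 /= negmod_c // subKn ?(ltnW ar) //.
have E : (r - (r - a + k) = a - k)%N by lia.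
rewrite E.
rewrite !natrD !natrB ?(ltnW ar) ?kle //.
set nR := negmod _ a; set n := negmod _ r => H.
have r0 : (r%:R : rat) != 0 by rewrite pnatr_eq0 -lt0n; lia.
have a0' : (a%:R : rat) != 0 by rewrite pnatr_eq0 -lt0n; lia.
have En : (n%:R : rat) = (r%:R * nR%:R + (a%:R - k%:R)) / a%:R.
  by rewrite H; field.
rewrite En; congr (_, _, _); field; by rewrite ?r0 ?a0'.
Qed.
Local Close Scope ring_scope.

Lemma modn_eq x d q y : y < d -> x = q * d + y -> x %% d = y.
Proof. by move=> yd ->; rewrite modnMDl modn_small. Qed.

Lemma invL r a : 0 < a -> a < r -> coprime a r -> a != r - 1 ->
  [/\ 0 < r %% (r - a), r %% (r - a) < r - a & coprime (r %% (r - a)) (r - a)].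
Proof.
move=> a0 ar co ne.
have c := @coprime_sub a r ar co.
have rL0 : 0 < r - a by rewrite subn_gt0.
split=> //; last by rewrite ltn_mod.
rewrite lt0n; apply/negP => /eqP z; move: c; rewrite z /coprime gcd0n => /eqP h.
by move: ne; rewrite (_ : a = r - 1) //; lia.
Qed.

Lemma invR r a : 0 < a -> a < r -> coprime a r -> a != 1 ->
  [/\ 0 < negmod r a, negmod r a < a & coprime (negmod r a) a].
Proof.
move=> a0 ar co ne.
have c := @coprime_neg a r a0 co.
split=> //; last exact: negmod_lt.
rewrite lt0n; apply/negP => /eqP z; move: c; rewrite z /coprime gcd0n => /eqP h.
by move: ne; rewrite h.
Qed.

Lemma tau_fuel_ext n m r a i : 0 < a -> a < r -> coprime a r -> r <= n -> r <= m ->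
  tau_fuel n r a i = tau_fuel m r a i.
Proof.
elim: n m r a i => [|n IH] m r a i a0 ar co rn rm; first by lia.
case: m rm => [|m] rm; first by lia.
rewrite /=.
case: ifP => // /norP [n1 nr1].
case: ifP => _.
- have [h1 h2 h3] := @invL r a a0 ar co nr1.
  apply: IH => //; lia.
- have [h1 h2 h3] := @invR r a a0 ar co n1.
  congr (_ + _); apply: IH => //; lia.
Qed.
Lemma tauL_eq r a i s : 0 < a -> a < r -> coprime a r -> Lbrick r a i s ->
  tau r a (i + s * (r - a)) = tau (r - a) (r %% (r - a)) i.
Proof.
case: r => [|r'] //.
move=> a0 ar co [h1 h2 h3].
have hj := h3 s (leqnn s).
move: h2; rewrite mulSn => h2.
rewrite /tau /=.
set j := i + s * (r'.+1 - a) in hj h2 *.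
case: ifP => [/orP [/eqP a1 | /eqP ar1] | /norP [n1 nr1]].
-
  subst a.
  case: (r' =P 1) => [r1|r1].
    subst r'.
    have i0 : i = 0 by lia.
    have j1 : j = 1 by lia.
    by rewrite j1 i0.
  have -> : r'.+1 %% (r'.+1 - 1) = 1 by apply: (@modn_eq _ _ 1); lia.
  have -> : r'.+1 - 1 = (r' - 1).+1 by lia.
  rewrite /tau /= mul1n.
  case: s @j hj h2 h3 => [|s] j hj h2 h3 //.
    have ji : j = i by rewrite /j mul0n addn0.
    rewrite ji.
    rewrite (@modn_eq _ _ 1 (i - 1)) ?(@modn_eq _ _ 1 (i - 1)); lia.
  have i0 : i = 0 by move: hj; rewrite /j mulSn; lia.
  have jr : j = r' by move: hj h2; rewrite /j mulSn; lia.
  rewrite jr i0.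
  rewrite (@modn_eq _ _ 1 (r' - 1)) ?(@modn_eq _ _ 0 (r' - 1)); lia.
-
  have aE : a = r' by lia.
  clear ar1; subst a.
  have jr : j = r' by lia.
  rewrite jr (_ : r'.+1 - r' = 1) ?modn1; last by lia.
  rewrite /tau /= modn1.
  by rewrite (@modn_eq _ _ r' 0) //; rewrite mulnS; lia.
- have aj : a <= j by lia.
  rewrite aj.
  have [g1 g2 g3] := @invL r'.+1 a a0 ar co nr1.
  rewrite (@modn_eq j _ s i) //.
  - apply: tau_fuel_ext => //; lia.
  - by rewrite /j addnC.
Qed.
Lemma tauR_eq r a i s : 0 < a -> a < r -> coprime a r -> Rbrick r a i s ->
  tau r a i = (r - a) + tau a (negmod r a) i.
Proof.
case: r => [|r'] //.
move=> a0 ar co [h1 _ _].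
rewrite /tau /=.
case: ifP => [/orP [/eqP a1 | /eqP ar1] | /norP [n1 nr1]].
- subst a.
  have i0 : i = 0 by lia.
  subst i.
  rewrite /negmod !modn1 /= muln0 add0n (@modn_eq _ _ 0 r'); lia.
- have aE : a = r' by lia.
  clear ar1; subst a.
  case: (r' =P 1) => [r1|r1].
    subst r'. have i0 : i = 0 by lia. by subst i.
  have -> : negmod r'.+1 r' = r' - 1.
    rewrite /negmod (@modn_eq r'.+1 r' 1 1); try lia.
    by rewrite modn_small; lia.
  case: r' ar co h1 a0 r1 => [|r''] // ar co h1 a0 r1.
  rewrite /= eqxx orbT (@modn_eq _ _ i (r''.+1 - i)) ?(@modn_eq _ _ i (r'' - i)); try lia.
- have ai : a <= i = false by apply/negbTE; rewrite -ltnNge.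
  rewrite ai.
  have [g1 g2 g3] := @invR r'.+1 a a0 ar co n1.
  congr (_ + _); apply: tau_fuel_ext => //; lia.
Qed.
Lemma sum_eq_ind m n k : \sum_(m <= k' < n) nat_of_bool (k == k') = (m <= k < n).
Proof.
elim: n => [|n IH]; first by rewrite big_geq // ltn0 andbF.
case: (leqP m n) => mn.
  rewrite big_nat_recr //= IH.
  case: (ltngtP k n) => kn; rewrite ?kn ?eqxx /=.
  - by rewrite andbT addn0 ltnS (ltnW kn) andbT.
  - by rewrite andbF addn0 ltnNge kn andbF.
  - by rewrite andbF add0n mn ltnSn.
rewrite big_geq //.
by case: (leqP m k) => mk //=; rewrite ltnS leqNgt (leq_trans mn mk).
Qed.

Local Open Scope ring_scope.
Lemma pt_inj r a k k' : (0 < r)%N -> (pt r a k == pt r a k') = (k == k').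
Proof.
move=> r0; apply/eqP/eqP => [E|->] //.
have := congr1 snd E; rewrite /pt /= => /(congr1 (fun x : rat => x * r%:R)).
rewrite !mulfVK ?pnatr_eq0 -?lt0n //.
by move/eqP; rewrite eqr_nat => /eqP.
Qed.

Lemma e1_pt r a k : (0 < r)%N -> (e1 == pt r a k) = false.
Proof.
move=> r0; apply/negbTE/eqP => E.
have E3 := congr1 snd E; have E2 := congr1 (fun v : vec => v.1.2) E.
move: E2 E3; rewrite /pt /e1 /= => E2 /esym /eqP.
rewrite mulf_eq0 invr_eq0 !pnatr_eq0 -[r == 0%N]negbK -lt0n r0 orbF => /eqP k0.
move: E2; rewrite k0 subn0 divff ?pnatr_eq0 -?lt0n //.
Qed.
Local Close Scope ring_scope.

Lemma Zdiv_pt r a t k : 0 < r -> k <= r -> Zdiv r a t (pt r a k) = (tau r a t < k).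
Proof.
move=> r0 kr; rewrite /Zdiv /Ddiv.
under eq_bigr => k' _ do rewrite pt_inj //.
by rewrite sum_eq_ind ltnS kr andbT.
Qed.

Lemma Zdiv_e1 r a t : 0 < r -> Zdiv r a t e1 = 0.
Proof.
move=> r0; rewrite /Zdiv /Ddiv big1 // => k' _.
by rewrite e1_pt.
Qed.

Lemma psiL_e1 r a : psiL r a e1 = e1.
Proof. by rewrite /psiL /vadd /vscale /e1 /e2 /= !mul0r !mulr0 !mulr1 !addr0. Qed.
Lemma psiR_e1 r a : psiR r a e1 = e1.
Proof. by rewrite /psiR /vadd /vscale /e1 /e3 /= !mul0r !mulr0 !mulr1 !addr0. Qed.

Theorem mainTheorem3 (r a : nat) (Ha0 : 0 < a) (Har : a < r) (Hco : coprime a r) :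
  (forall i s, Lbrick r a i s ->
     forall w, w \in res_rays (rL r a) (aL r a) ->
       restrL r a (Zdiv r a (i + s * (r - a))) w = ZLdiv r a i w) /\
  (forall i s, Rbrick r a i s ->
     forall w, w \in res_rays (rR r a) (aR r a) ->
       restrR r a (Zdiv r a i) w = ZRdiv r a i w).
Proof.
have r1 : 1 < r by lia.
have r0 : 0 < r by lia.
split.
- move=> i s Hb w; rewrite /res_rays inE => /orP [/eqP -> | /mapP [k kin ->]].
    by rewrite /restrL /ZLdiv psiL_e1 !Zdiv_e1 // /rL subn_gt0.
  move: kin; rewrite mem_iota add0n ltnS => /andP [_ kle].
  rewrite /restrL /ZLdiv /rL /aL in kle *.
  rewrite psiL_pt // !Zdiv_pt ?subn_gt0 //; last by apply: leq_trans kle (leq_subr _ _).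
  by rewrite (tauL_eq _ _ _ _ Ha0 Har Hco Hb).
- move=> i s Hb w; rewrite /res_rays inE => /orP [/eqP -> | /mapP [k kin ->]].
    by rewrite /restrR /ZRdiv psiR_e1 !Zdiv_e1.
  move: kin; rewrite mem_iota add0n ltnS => /andP [_ kle].
  rewrite /restrR /ZRdiv /rR /aR in kle *.
  rewrite psiR_pt // !Zdiv_pt //; last by lia.
  by rewrite (tauR_eq _ _ _ _ Ha0 Har Hco Hb) ltn_add2l.
Qed.
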